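(* Let $T$ be a tree of order $n\ge 1$ and let \[ h(T)=\prod_{w\in V(T)}\bigl(d_T(w)+1\bigr)^{d_T(w)+1}. \] Then $h(T)\le 4^{n-1}n^n$, with equality if and only if $T\cong S_n$.
   Context: $d_T(w)$ denotes the degree of vertex $w$ in $T$. $S_n$ denotes the star on $n$ vertices (for $n\le 3$ this coincides with the path on $n$ vertices). *)

(* Defs.v *)
From mathcomp Require Import all_boot.
Set Implicit Arguments. Unset Strict Implicit. Unset Printing Implicit Defensive.

Definition simple_graph (V : finType) (e : rel V) : Prop :=
  symmetric e /\ irreflexive e.

Definition connected_graph (V : finType) (e : rel V) : Prop :=
  forall x y : V, connect e x y.

Definition has_cycle (V : finType) (e : rel V) : Prop :=
  exists c : seq V, 3 <= size c /\ ucycle e c.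

Definition acyclic (V : finType) (e : rel V) : Prop := ~ has_cycle e.

Definition is_tree (V : finType) (e : rel V) : Prop :=
  simple_graph e /\ connected_graph e /\ acyclic e.

Definition deg (V : finType) (e : rel V) (w : V) : nat := #|[pred y | e w y]|.

Definition h_index (V : finType) (e : rel V) : nat :=
  \prod_(w : V) (deg e w).+1 ^ (deg e w).+1.

(* The star S_n on vertex set 'I_n, centre 0. *)
Definition star_rel (n : nat) : rel 'I_n :=
  fun i j => (nat_of_ord i == 0) != (nat_of_ord j == 0).

Definition graph_iso (V W : finType) (e : rel V) (f : rel W) : Prop :=
  exists g : V -> W, bijective g /\ forall x y : V, e x y = f (g x) (g y).

(* Main.v *)
Require Import Defs.
From mathcomp Require Import all_boot fingroup perm zify.
Set Implicit Arguments. Unset Strict Implicit. Unset Printing Implicit Defensive.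

Lemma bern Q k : (Q+1)^k * (Q+1-k) <= Q^k * (Q+1).
Proof.
elim: k => [|k IH]; first by rewrite !expn0 subn0.
have h1 : (Q+1)^k.+1 * (Q+1-k.+1) <= Q * ((Q+1)^k * (Q+1-k)).
  rewrite expnS.
  have : (Q + 1) * (Q + 1 - k.+1) <= Q * (Q+1-k) by nia.
  move: ((Q+1)^k) => A H. nia.
apply: (leq_trans h1). rewrite expnS -mulnA. by rewrite leq_mul2l IH orbT.
Qed.

Lemma stepS x : (x+1)^(2*(x+1)) < x^x * (x+2)^(x+2).
Proof.
set P := x * (x+2).
have e1 : (x+1)^(2*(x+1)) = (P+1)^x * (P+1).
  have h : (x+1)^2 = P+1 by rewrite /P; nia.
  by rewrite expnM h expnD expn1.
have e2 : x^x * (x+2)^(x+2) = P^x * (x+2)^2 by rewrite expnD mulnA expnMn.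
rewrite e1 e2.
have hA : 0 < P^x.
  rewrite expn_gt0 /P; case: (x) => // m; by rewrite muln_gt0.
have hB := bern P x.
have hpos : 0 < P + 1 - x by rewrite /P; lia.
rewrite -(ltn_pmul2r hpos).
apply: (@leq_ltn_trans (P^x * (P+1) * (P+1))).
  by rewrite mulnAC leq_mul2r hB orbT.
rewrite -!mulnA ltn_pmul2l //. rewrite /P.
have -> : x * (x + 2) + 1 - x = x*x + x + 1 by lia.
rewrite !mulnDr !mulnDl. nia.
Qed.

Definition G a := a.+2 ^ a.+2.

Lemma G_gt0 a : 0 < G a. Proof. by rewrite expn_gt0. Qed.

Lemma pow_gt0 x : 0 < x ^ x. Proof. case: x => // n; by rewrite expn_gt0. Qed.

Lemma monoM x y : x < y -> (x+1)^(x+1) * y^y < (y+1)^(y+1) * x^x.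
Proof.
elim: y => // y IH; rewrite ltnS leq_eqVlt => /orP [/eqP <- | Hxy].
  have := stepS x. rewrite mul2n -addnn expnD.
  have -> : x.+1 + 1 = x + 2 by lia. by rewrite -[x.+1]addn1 mulnC.
have IH' := IH Hxy.
have S := stepS y.
have E: (y.+1 + 1) = y + 2 by lia. rewrite E -[y.+1]addn1.
rewrite -(ltn_pmul2r (pow_gt0 y)).
apply: (@leq_trans ((y+1)^(y+1) * x^x * (y+1)^(y+1))).
  by rewrite mulnAC ltn_pmul2r // expn_gt0 addn1.
rewrite mulnAC -expnD addnn -mul2n mulnAC (mulnC ((y+2)^ _)).
by rewrite leq_mul2r ltnW // orbT.
Qed.

Lemma Gstep_lt a b : 0 < a -> G b.+1 * G (a+b) < G (a+b).+1 * G b.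
Proof.
move=> a0. have H : b.+2 < (a+b).+2 by lia.
move: (monoM H); rewrite /G !addn1 //.
Qed.

Lemma Gstep_le a b : G b.+1 * G (a+b) <= G (a+b).+1 * G b.
Proof.
case: a => [|a]; first by rewrite add0n mulnC.
by apply: ltnW; apply: Gstep_lt.
Qed.

Lemma superadd a b : G a * G b <= 4 * G (a+b).
Proof.
elim: b => [|b IH]; first by rewrite addn0 mulnC.
rewrite -(leq_pmul2r (G_gt0 (a+b))) addnS.
apply: (@leq_trans (G a * (G (a+b).+1 * G b))).
  by rewrite -mulnA leq_mul2l Gstep_le orbT.
apply: (@leq_trans (G (a+b).+1 * (4 * G (a+b)))).
  by rewrite mulnCA leq_mul2l IH orbT.
by rewrite mulnCA mulnA.
Qed.

Lemma superadd_lt a b : 0 < a -> 0 < b -> G a * G b < 4 * G (a+b).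
Proof.
move=> a0; case: b => // b _.
rewrite -(ltn_pmul2r (G_gt0 (a+b))) addnS.
apply: (@leq_trans (G a * (G (a+b).+1 * G b))).
  by rewrite -mulnA ltn_pmul2l ?G_gt0 // Gstep_lt.
apply: (@leq_trans (G (a+b).+1 * (4 * G (a+b)))).
  by rewrite mulnCA leq_mul2l superadd orbT.
by rewrite mulnCA mulnA.
Qed.

Lemma Gmono_lt a b : a < b -> G a < G b.
Proof.
move=> ab; rewrite /G.
apply: (@leq_trans (b.+2 ^ a.+2)); first by rewrite ltn_exp2r.
by apply: leq_pexp2l => //; lia.
Qed.

Lemma Gmono_le a b : a <= b -> G a <= G b.
Proof. rewrite leq_eqVlt => /orP [/eqP -> //|/Gmono_lt/ltnW //]. Qed.

Lemma seqbound (T : Type) (r : seq T) (a : T -> nat) :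
  4 * \prod_(w <- r) G (a w) <= 4 ^ size r * G (\sum_(w <- r) a w).
Proof.
elim: r => [|x r IH]; first by rewrite !big_nil.
rewrite !big_cons /= expnS.
apply: (@leq_trans (G (a x) * (4 ^ size r * G (\sum_(j <- r) a j)))).
  by rewrite mulnCA leq_mul2l IH orbT.
by rewrite mulnCA -mulnA (mulnCA 4) leq_mul2l superadd orbT.
Qed.

Definition degS (V : finType) (e : rel V) (S : {set V}) (w : V) :=
  #|[set y in S | e w y]|.

Lemma cycle_split (V : finType) (e : rel V) z r1 y r2 :
  symmetric e -> irreflexive e ->
  path e z (r1 ++ y :: r2) -> uniq (z :: r1 ++ y :: r2) -> r1 != [::] -> e z y ->
  has_cycle e.
Proof.
move=> Hs Hi pth un r1n ezy.
exists (z :: rcons r1 y); split.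
  by case: r1 r1n {pth un} => // a l _ /=; rewrite size_rcons.
rewrite /ucycle /= rcons_path.
move: pth; rewrite cat_path /= => /and3P [p1 l1 _].
rewrite rcons_path p1 l1 last_rcons Hs ezy /=.
move: un; rewrite /= mem_cat inE negb_or cat_uniq /= mem_rcons inE negb_or rcons_uniq.
case/and5P=> /and3P[h1 h2 _] h3 /norP[h4 _] _ _.
by rewrite negb_or h1 h2 h3 h4.
Qed.




Lemma step_ext (V : finType) (e : rel V) (S : {set V}) z r :
  symmetric e -> irreflexive e ->
  (forall w, w \in S -> 1 < degS e S w) ->
  z \in S -> path e z r -> uniq (z :: r) ->
  has_cycle e \/ exists2 y, y \in S & path e y (z :: r) && uniq (y :: z :: r).
Proof.
move=> Hs Hi Hdeg zS pth un.
have [y yN yb] : exists2 y, y \in [set y in S | e z y] & y != head z r.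
  have := Hdeg z zS; rewrite /degS (cardsD1 (head z r)) => H.
  have : 0 < #|[set y in S | e z y] :\ head z r|.
    by move: H; case: (_ \in _) => /=; lia.
  by case/card_gt0P => y /setD1P [yb yN]; exists y.
move: yN; rewrite inE => /andP [yS ezy].
case: (boolP (y \in z :: r)) => yin.
  left; move: yin; rewrite inE => /orP [/eqP yz|yr].
    by rewrite yz Hi in ezy.
  case/splitPr: yr pth un yb => r1 r2 pth un yb.
  apply: (cycle_split Hs Hi pth un _ ezy).
  by case: r1 {pth un} yb => //=; rewrite eqxx.
right; exists y => //.
by rewrite /= (Hs y z) ezy pth /= yin.
Qed.

Lemma cycle_found (V : finType) (e : rel V) (S : {set V}) :
  symmetric e -> irreflexive e ->
  (forall w, w \in S -> 1 < degS e S w) ->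
  forall m z r, #|V| - size (z :: r) <= m -> z \in S -> path e z r ->
  uniq (z :: r) -> has_cycle e.
Proof.
move=> Hs Hi Hdeg; elim=> [|m IH] z r Hm zS pth un;
  case: (step_ext Hs Hi Hdeg zS pth un) => // [[y yS /andP [pth' un']]].
  exfalso; move/card_uniqP: un' => /= h; have := leq_trans (eq_leq (esym h)) (max_card _).
  move: Hm => /=; lia.
apply: (IH y (z :: r)) => //; move: Hm => /=; lia.
Qed.

Lemma leaf (V : finType) (e : rel V) (S : {set V}) :
  simple_graph e -> acyclic e -> S != set0 ->
  exists2 w, w \in S & degS e S w <= 1.
Proof.
move=> [Hs Hi] Hac Sn.
case: (boolP [exists w in S, degS e S w <= 1]).
  by case/existsP => w /andP [wS H]; exists w.
move/existsPn => H; exfalso; apply: Hac.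
have Hdeg : forall w, w \in S -> 1 < degS e S w.
  by move=> w wS; move: (H w); rewrite wS /= ltnNge.
case/set0Pn: Sn => x xS.
by apply: (cycle_found Hs Hi Hdeg (m := #|V|) (z := x) (r := [::])) => //=; lia.
Qed.

Lemma sum_bool (V : finType) (A : {set V}) (b : pred V) :
  \sum_(x in A) (b x : nat) = #|[set x in A | b x]|.
Proof.
rewrite -sum1_card big_mkcond [RHS]big_mkcond; apply: eq_bigr => x _.
by rewrite inE; case: (x \in A); case: (b x).
Qed.

Lemma degS_split (V : finType) (e : rel V) (S : {set V}) w x :
  w \in S -> degS e S x = e x w + degS e (S :\ w) x.
Proof.
move=> wS; rewrite /degS (cardsD1 w) inE wS /=; congr (_ + _).
by apply: eq_card => y; rewrite !inE andbA.
Qed.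

Lemma edgebound (V : finType) (e : rel V) :
  simple_graph e -> acyclic e -> forall S : {set V}, S != set0 ->
  \sum_(w in S) degS e S w + 2 <= 2 * #|S|.
Proof.
move=> Hg Hac S; move: {2}#|S| (leqnn #|S|) => k.
have [Hs Hi] := Hg.
elim: k S => [|k IH] S HS Sn.
  by move: Sn; rewrite -cards_eq0; move: HS; lia.
have [w wS wd] := leaf Hg Hac Sn.
rewrite (big_setD1 w wS) /=.
case: (boolP (S :\ w == set0)) => [/eqP S0 | S'n].
  have dw : degS e S w = 0.
    apply/eqP; rewrite cards_eq0; apply/eqP/setP => y; rewrite !inE.
    case: (boolP (y == w)) => [/eqP -> | yw]; first by rewrite Hi andbF.
    apply/negbTE/andP => [[yS _]].
    have : y \in S :\ w by apply/setD1P; split.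
    by rewrite S0 inE.
  rewrite S0 big_set0 dw.
  have : #|S| = 1 by rewrite (cardsD1 w) wS S0 cards0.
  lia.
have HS' : #|S :\ w| <= k by move: HS; rewrite (cardsD1 w) wS; lia.
have IH' := IH _ HS' S'n.
rewrite (eq_bigr (fun x => e x w + degS e (S :\ w) x)); last first.
  by move=> x _; apply: degS_split.
rewrite big_split /= sum_bool.
have -> : #|[set x in S :\ w | e x w]| = degS e S w.
  apply: eq_card => x; rewrite !inE (Hs x w).
  case: (boolP (e w x)) => ewx; rewrite ?andbF ?andbT //.
  case: (boolP (x == w)) => [/eqP xw|//]; by rewrite xw Hi in ewx.
move: IH' wd; rewrite (cardsD1 w S) wS; lia.
Qed.

Definition starC (V : finType) (e : rel V) (c : V) :=
  forall x y, e x y = ((x == c) != (y == c)).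

Lemma size_ie (V : finType) : size (index_enum V) = #|V|.
Proof. by rewrite cardT enumT. Qed.

Lemma prod_sum_bound (V : finType) (a : V -> nat) :
  4 * \prod_(w : V) G (a w) <= 4 ^ #|V| * G (\sum_(w : V) a w).
Proof. by rewrite -size_ie; apply: seqbound. Qed.

Lemma deg_ge1 (V : finType) (e : rel V) w :
  connected_graph e -> 2 <= #|V| -> 1 <= deg e w.
Proof.
move=> Hc H2.
have : 0 < #|predC1 w| by rewrite cardC1; lia.
case/card_gt0P => v; rewrite inE => vw.
case/connectP: (Hc w v) => p pth vl.
case: p pth vl => [|y p] /=; first by move=> _ vw'; rewrite vw' eqxx in vw.
case/andP => ewy _ _; apply/card_gt0P; by exists y.
Qed.

Lemma deg_degS (V : finType) (e : rel V) w : deg e w = degS e setT w.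
Proof. by apply: eq_card => y; rewrite !inE. Qed.

Lemma sum_deg (V : finType) (e : rel V) :
  is_tree e -> 0 < #|V| -> \sum_(w : V) deg e w + 2 <= 2 * #|V|.
Proof.
move=> [Hg [_ Hac]] n0.
have : setT != set0 :> {set V} by rewrite -cards_eq0 cardsT; lia.
move/(edgebound Hg Hac); rewrite cardsT.
suff -> : \sum_(w : V) deg e w = \sum_(w in setT) degS e setT w by [].
by apply: eq_big => [w|w _]; [rewrite inE | apply: deg_degS].
Qed.

Lemma starC_deg (V : finType) (e : rel V) c w :
  starC e c -> deg e w = if w == c then #|V|.-1 else 1.
Proof.
move=> Hc; rewrite /deg; case: (boolP (w == c)) => [/eqP -> | wc].
  by rewrite -(cardC1 c); apply: eq_card => y; rewrite !inE Hc eqxx.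
by rewrite -(card1 c); apply: eq_card => y; rewrite !inE Hc (negbTE wc); case: (y == c).
Qed.

Lemma starC_h (V : finType) (e : rel V) c n :
  starC e c -> #|V| = n -> h_index e = 4 ^ (n - 1) * n ^ n.
Proof.
move=> Hc Hn; rewrite /h_index (bigD1 c) //= (starC_deg _ Hc) eqxx.
rewrite (eq_bigr (fun _ => 4)); last first.
  by move=> w wc; rewrite (starC_deg _ Hc) (negbTE wc).
rewrite prod_nat_const.
have -> : #|[pred i | true && (i != c)]| = n - 1.
  by rewrite -Hn subn1 -(cardC1 c); apply: eq_card => y; rewrite !inE.
have -> : #|V|.-1.+1 = n by move: Hn (max_card (pred1 c)); rewrite card1; lia.
by rewrite mulnC.
Qed.

Lemma iso_starC (V : finType) (e : rel V) n :
  0 < n -> graph_iso e (@star_rel n) -> exists c, starC e c.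
Proof.
move=> n1 [g [[g' gK g'K] He]].
pose z : 'I_n := Ordinal n1.
exists (g' z) => x y; rewrite He /star_rel.
have E : forall u, (nat_of_ord (g u) == 0) = (u == g' z).
  move=> u; apply/eqP/eqP => [h|->]; last by rewrite g'K.
  by apply: (can_inj gK); rewrite g'K; apply: val_inj.
by rewrite !E.
Qed.

Lemma starC_iso (V : finType) (e : rel V) n c :
  #|V| = n -> starC e c -> graph_iso e (@star_rel n).
Proof.
move=> Hn Hc; subst n.
have n1 : 0 < #|V| by apply/card_gt0P; exists c.
pose z : 'I_#|V| := Ordinal n1.
pose g := fun x => tperm (enum_rank c) z (enum_rank x).
exists g; split.
  apply: inj_card_bij; last by rewrite card_ord.
  by move=> x y /perm_inj /enum_rank_inj.
have E : forall u, (nat_of_ord (g u) == 0) = (u == c).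
  move=> u; have -> : (nat_of_ord (g u) == 0) = (g u == z) by [].
  rewrite /g; apply/eqP/eqP => [h | ->]; last by rewrite tpermL.
  apply: enum_rank_inj; apply: (@perm_inj _ (tperm (enum_rank c) z)); by rewrite h tpermL.
by move=> x y; rewrite Hc /star_rel !E.
Qed.

Lemma big2 (R : Type) (idx : R) (op : Monoid.com_law idx) (V : finType)
  (F : V -> R) u v : u != v ->
  \big[op/idx]_(w : V) F w =
  op (F u) (op (F v) (\big[op/idx]_(w | (w != u) && (w != v)) F w)).
Proof.
move=> uv; rewrite (bigD1 u) //= (bigD1 v) /=; last by rewrite eq_sym.
by [].
Qed.

Lemma big1c (R : Type) (idx : R) (op : Monoid.com_law idx) (V : finType)
  (F : V -> R) u :
  \big[op/idx]_(w : V) F w = op (F u) (\big[op/idx]_(w | w != u) F w).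
Proof. by rewrite (bigD1 u). Qed.

Lemma test (V : finType) : \sum_(i : V) 1 = #|V|.
Proof. by rewrite sum1_card. Qed.

Lemma main_ge2 (n : nat) (V : finType) (e : rel V) :
  2 <= n -> #|V| = n -> is_tree e ->
  h_index e <= 4 ^ (n - 1) * n ^ n /\
  (h_index e = 4 ^ (n - 1) * n ^ n -> exists c, starC e c).
Proof.
move=> n2 Hn Ht.
have [[Hs Hi] [Hc Hac]] := Ht.
pose a w := (deg e w).-1.
have Ha : forall w, deg e w = (a w).+1.
  by move=> w; rewrite /a prednK // deg_ge1 // Hn.
have Hh : h_index e = \prod_(w : V) G (a w).
  by rewrite /h_index; apply: eq_bigr => w _; rewrite Ha.
have Hsum : \sum_(w : V) a w + 2 <= n.
  have := sum_deg Ht ltac:(lia).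
  rewrite (eq_bigr (fun w => a w + 1)); last by move=> w _; rewrite Ha addn1.
  by rewrite big_split /= sum1_card Hn; lia.
have Gn : G (n - 2) = n ^ n by rewrite /G; have -> : (n - 2).+2 = n by lia.
have e4 : 4 ^ n = 4 * 4 ^ (n - 1) by rewrite -expnS; congr (_ ^ _); lia.
have B : 4 * h_index e <= 4 ^ n * n ^ n.
  rewrite Hh; apply: (leq_trans (prod_sum_bound a)); rewrite Hn -Gn.
  by rewrite leq_mul2l Gmono_le ?orbT //; lia.
have Hle : h_index e <= 4 ^ (n - 1) * n ^ n.
  by move: B; rewrite e4 -mulnA leq_pmul2l.
split => // Heq.
have Claim1 : forall u v, u != v -> 0 < a u -> 0 < a v -> False.
  move=> u v uv au av.
  pose a' w := if w == u then a u + a v else if w == v then 0 else a w.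
  have vu : (v == u) = false by rewrite eq_sym; apply/negbTE.
  pose R := \prod_(w | (w != u) && (w != v)) G (a w).
  have P1 : \prod_(w : V) G (a w) = G (a u) * (G (a v) * R) by apply: big2.
  have P2 : \prod_(w : V) G (a' w) = G (a u + a v) * (G 0 * R).
    rewrite (big2 _ (fun w => G (a' w)) uv) /a' eqxx vu eqxx; congr (_ * (_ * _)).
    apply: eq_bigr => w /andP [wu wv]; by rewrite (negbTE wu) (negbTE wv).
  pose Rs := \sum_(w | (w != u) && (w != v)) a w.
  have S1 : \sum_(w : V) a w = a u + (a v + Rs) by apply: big2.
  have S2 : \sum_(w : V) a' w = a u + a v + (0 + Rs).
    rewrite (big2 _ a' uv) /a' eqxx vu eqxx; congr (_ + (_ + _)).
    apply: eq_bigr => w /andP [wu wv]; by rewrite (negbTE wu) (negbTE wv).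
  have Rpos : 0 < R by rewrite /R; apply: prodn_gt0 => w; apply: G_gt0.
  have Plt : \prod_(w : V) G (a w) < \prod_(w : V) G (a' w).
    rewrite P1 P2 [G (a u) * _]mulnA [G (a u + a v) * _]mulnA ltn_pmul2r //.
    rewrite (mulnC _ (G 0)); exact: superadd_lt.
  have Seq : \sum_(w : V) a' w = \sum_(w : V) a w by rewrite S1 S2; lia.
  have := prod_sum_bound a'; rewrite Seq.
  have : G (\sum_(w : V) a w) <= G (n - 2) by apply: Gmono_le; lia.
  rewrite Gn Hn => H1 H2.
  have : 4 * h_index e < 4 * h_index e.
    rewrite {2}Heq mulnA -e4 Hh.
    apply: (leq_trans _ (leq_trans H2 _)); first by rewrite ltn_pmul2l.
    by rewrite leq_mul2l H1 orbT.
  by rewrite ltnn.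
have [c Hc0] : exists c, forall w, w != c -> a w = 0.
  case: (boolP [exists w, 0 < a w]).
    case/existsP => c ac; exists c => w wc.
    case: (posnP (a w)) => // aw; exfalso; apply: (Claim1 c w _ ac aw); by rewrite eq_sym.
  move/existsPn => H.
  have : 0 < #|V| by lia.
  case/card_gt0P => c _; exists c => w _.
  by move: (H w); case: (a w).
have Hhc : h_index e = G (a c) * 4 ^ (n - 1).
  rewrite Hh (big1c _ _ c) (eq_bigr (fun _ => 4)); last first.
    by move=> w wc; rewrite Hc0.
  rewrite prod_nat_const; congr (_ * (_ ^ _)).
  by rewrite -Hn subn1 -(cardC1 c); apply: eq_card => y; rewrite !inE.
have ac : a c = n - 2.
  move: Heq; rewrite Hhc mulnC -Gn => /eqP; rewrite eqn_pmul2l ?expn_gt0 //.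
  case: (ltngtP (a c) (n - 2)) => // H; first by move/Gmono_lt: H; rewrite ltn_neqAle => /andP [/negbTE ->].
  by move/Gmono_lt: H; rewrite ltn_neqAle eq_sym => /andP [/negbTE ->].
have dc : deg e c = #|V|.-1 by rewrite Ha ac Hn; lia.
have d1 : forall w, w != c -> deg e w = 1 by move=> w wc; rewrite Ha Hc0.
have Nc : forall y, e c y = (y != c).
  have : [pred y | e c y] \subset predC1 c.
    by apply/subsetP => y; rewrite !inE; apply: contraTneq => ->; rewrite Hi.
  move/(subset_cardP _) => H y.
  have := H _ y; rewrite !inE; apply.
  by rewrite cardC1 -dc.
exists c => x y.
case: (boolP (x == c)) => [/eqP -> | xc].
  by rewrite Nc; case: (y == c).
rewrite /=.
have := cardD1 c [pred z | e x z]; rewrite -/(deg e x) d1 // inE (Hs x c) Nc xc add1n.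
case=> /esym/card0_eq H0.
case: (boolP (y == c)) => [/eqP -> | yc]; first by rewrite (Hs x c) Nc xc.
by have := H0 y; rewrite !inE yc /= => ->.
Qed.

Theorem lemma2p8 (n : nat) (V : finType) (e : rel V) :
  1 <= n -> #|V| = n -> is_tree e ->
  h_index e <= 4 ^ (n - 1) * n ^ n /\
  (h_index e = 4 ^ (n - 1) * n ^ n <-> graph_iso e (@star_rel n)).
Proof.
move=> n1 Hn Ht.
suff [Hle Heq] : h_index e <= 4 ^ (n - 1) * n ^ n /\
  (h_index e = 4 ^ (n - 1) * n ^ n -> exists c, starC e c).
  split => //; split => [/Heq [c Hc] | Hiso]; first exact: starC_iso Hn Hc.
  have [c Hc] := iso_starC n1 Hiso; exact: starC_h Hc Hn.
case: (ltngtP n 1) => [|n2|n1']; first by lia.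
  exact: main_ge2 n2 Hn Ht.
have [[Hs Hi] _] := Ht.
have : 0 < #|V| by lia.
case/card_gt0P => c _.
have Hall : forall x, x = c.
  have /fintype_le1P H : #|V| <= 1 by lia.
  by move=> x; exact: H c x.
have Hc : starC e c by move=> x y; rewrite (Hall x) (Hall y) Hi eqxx.
by rewrite (starC_h Hc Hn); split => // _; exists c.
Qed.
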